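(* Let $S$ be an idempotent semiring. The following are equivalent: (1) $\mathcal{L}^{\bullet}$ is the least distributive lattice congruence on $S$; (2) $\mathcal{D}^{+}\subseteq\mathcal{L}^{\bullet}$ and $S$ satisfies $x+xy+x\approx x$; (3) $S$ satisfies $x+xyx+x\approx x$ and $\mathcal{R}^{\bullet}\subseteq\mathcal{D}^{+}\subseteq\mathcal{L}^{\bullet}$; (4) $\leq^{l}_{\cdot}\ \subseteq\ \leq_{+}$ on $S$; (5) $S$ satisfies the identity $x\approx xy+x+xy$; (6) $S$ satisfies the identity $x\approx x(y+x+y)$.
   Context: An idempotent semiring is an algebra $(S,+,\cdot)$ with two binary operations such that $(S,+)$ and $(S,\cdot)$ are bands (associative, with $x+x=x$ and $xx=x$), and both distributive laws $x(y+z)=xy+xz$ and $(x+y)z=xz+yz$ hold; addition is not assumed commutative. A distributive lattice congruence on $S$ is a congruence $\rho$ such that $S/\rho$ satisfies $x+y\approx y+x$, $xy\approx yx$ and $x+xy\approx x$. Green's relations: $a\,\mathcal{L}^{\bullet}\,b$ iff $ab=a$ and $ba=b$; $a\,\mathcal{R}^{\bullet}\,b$ iff $ab=b$ and $ba=a$; $a\,\mathcal{D}^{+}\,b$ iff $a+b+a=a$ and $b+a+b=b$. Orders: $a\leq^{l}_{\cdot} b$ iff $a=ba$; $a\leq_{+} b$ iff $b=a+b$ and $b=b+a$. *)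

(* Defs.v *)
Section Defs.
Variable S : Type.
Variables (add mul : S -> S -> S).

(* Idempotent semiring: (S,+) and (S,.) are bands, both distributive laws;
   addition not assumed commutative. *)
Record idempotent_semiring : Prop := {
  add_assoc : forall x y z, add x (add y z) = add (add x y) z;
  add_idem  : forall x, add x x = x;
  mul_assoc : forall x y z, mul x (mul y z) = mul (mul x y) z;
  mul_idem  : forall x, mul x x = x;
  distr_l   : forall x y z, mul x (add y z) = add (mul x y) (mul x z);
  distr_r   : forall x y z, mul (add x y) z = add (mul x z) (mul y z)
}.

Definition rel_incl (R R' : S -> S -> Prop) : Prop := forall a b, R a b -> R' a b.

Record congruence (rho : S -> S -> Prop) : Prop := {
  cong_refl  : forall x, rho x x;
  cong_sym   : forall x y, rho x y -> rho y x;
  cong_trans : forall x y z, rho x y -> rho y z -> rho x z;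
  cong_add   : forall x x' y y', rho x x' -> rho y y' -> rho (add x y) (add x' y');
  cong_mul   : forall x x' y y', rho x x' -> rho y y' -> rho (mul x y) (mul x' y')
}.

(* S/rho satisfies x+y = y+x, xy = yx, x + xy = x. *)
Definition dl_congruence (rho : S -> S -> Prop) : Prop :=
  congruence rho /\
  (forall x y, rho (add x y) (add y x)) /\
  (forall x y, rho (mul x y) (mul y x)) /\
  (forall x y, rho (add x (mul x y)) x).

Definition least_dl_congruence (rho : S -> S -> Prop) : Prop :=
  dl_congruence rho /\ forall sigma, dl_congruence sigma -> rel_incl rho sigma.

Definition Ldot (a b : S) : Prop := mul a b = a /\ mul b a = b.
Definition Rdot (a b : S) : Prop := mul a b = b /\ mul b a = a.
Definition Dplus (a b : S) : Prop := add (add a b) a = a /\ add (add b a) b = b.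

Definition le_ldot (a b : S) : Prop := a = mul b a.
Definition le_plus (a b : S) : Prop := b = add a b /\ b = add b a.

End Defs.

(* Main.v *)
Require Import Defs.
From Corelib Require Import ssreflect.

Section Aux.
Variables (S : Type) (add mul : S -> S -> S).
Hypothesis HS : idempotent_semiring S add mul.
Let aA := add_assoc _ _ _ HS.
Let aI := add_idem _ _ _ HS.
Let mA := mul_assoc _ _ _ HS.
Let mI := mul_idem _ _ _ HS.
Let dl := distr_l _ _ _ HS.
Let dr := distr_r _ _ _ HS.

Definition P5p := forall x y : S, x = add (add (mul x y) x) (mul x y).

Lemma p5_A (H5 : P5p) x y : add x (mul x y) = x.
Proof. rewrite {1}(H5 x y). rewrite -aA aI -H5. done. Qed.

Lemma p5_B (H5 : P5p) x y : add (mul x y) x = x.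
Proof. rewrite {2}(H5 x y). rewrite !aA aI -H5. done. Qed.

Lemma p5_lr (H5 : P5p) x y : mul (mul x y) x = mul x y.
Proof.
  transitivity (mul (mul x y) (add (mul x y) x)).
  by rewrite (p5_B H5 x y).
  rewrite dl mI. exact: p5_A H5 (mul x y) x.
Qed.

Lemma absorb c a a' : mul c a = c -> mul a a' = a -> mul c a' = c.
Proof. move=> H1 H2. by rewrite -{1}H1 -mA H2 H1. Qed.

Lemma p5_p1 (H5 : P5p) : least_dl_congruence S add mul (Ldot S mul).
Proof.
  have A := p5_A H5. have B := p5_B H5. have lr := p5_lr H5.
  split; [split; [split|split;[|split]]|].
  - move=> x; split; apply mI.
  - by move=> x y [h1 h2]; split.
  - move=> x y z [h1 h2] [h3 h4]; split; [exact: absorb h1 h3 | exact: absorb h4 h2].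
  - move=> a a' b b' [h1 h2] [h3 h4]; split.
    + rewrite dr !dl h1 h3 A B. done.
    + rewrite dr !dl h2 h4 A B. done.
  - move=> a a' b b' [h1 h2] [h3 h4]; split.
    + rewrite mA (absorb (mul a b) a a' (lr a b) h1).
      apply: (absorb _ b); [by rewrite -mA mI | exact h3].
    + rewrite mA (absorb (mul a' b') a' a (lr a' b') h2).
      apply: (absorb _ b'); [by rewrite -mA mI | exact h4].
  - move=> x y; split; rewrite dr !dl !mI A B; done.
  - move=> x y; split.
    + rewrite mA -(mA x y y) mI lr. done.
    + rewrite mA -(mA y x x) mI lr. done.
  - move=> x y; rewrite A; split; apply mI.
  - move=> sigma [C [Hc [Hm Ha]]] a b [h1 h2].
    have H := Hm a b. rewrite h1 h2 in H. exact H.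
Qed.

Lemma p1_p5 : least_dl_congruence S add mul (Ldot S mul) -> P5p.
Proof.
  move=> [[C [Hc [Hm Ha]]] _] x y.
  have A : add x (mul x y) = x.
  { have [_ h] := Ha x y. rewrite dl mI mA mI in h. exact h. }
  have lr : mul (mul x y) x = mul x y.
  { have [h _] := Hm x y. rewrite mA -(mA x y y) mI in h. exact h. }
  have [h _] := Hc x (mul x y).
  rewrite dr !dl !mI (mA x x y) mI lr aI A in h. by rewrite h.
Qed.

End Aux.

Theorem theorem3p3 (S : Type) (add mul : S -> S -> S)
  (HS : idempotent_semiring S add mul) :
  let L := Ldot S mul in
  let R := Rdot S mul in
  let D := Dplus S add in
  let P1 := least_dl_congruence S add mul L in
  let P2 := rel_incl S D L /\
            (forall x y : S, add (add x (mul x y)) x = x) in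
  let P3 := (forall x y : S, add (add x (mul (mul x y) x)) x = x) /\
            rel_incl S R D /\ rel_incl S D L in
  let P4 := rel_incl S (le_ldot S mul) (le_plus S add) in
  let P5 := forall x y : S, x = add (add (mul x y) x) (mul x y) in
  let P6 := forall x y : S, x = mul x (add (add y x) y) in
  (P1 <-> P2) /\ (P1 <-> P3) /\ (P1 <-> P4) /\ (P1 <-> P5) /\ (P1 <-> P6).
Proof.
  have aA := add_assoc _ _ _ HS.
  have aI := add_idem _ _ _ HS.
  have mA := mul_assoc _ _ _ HS.
  have mI := mul_idem _ _ _ HS.
  have dl := distr_l _ _ _ HS.
  move=> L R D P1 P2 P3 P4 P5 P6.
  have E15 : P1 <-> P5 by split; [exact: p1_p5 | exact: p5_p1].
  have E56 : P5 <-> P6.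
  { have e : forall x y, mul x (add (add y x) y) = add (add (mul x y) x) (mul x y).
    { move=> x y. by rewrite !dl mI. }
    by split=> H x y; rewrite ?e; [|rewrite -e]; apply H. }
  have E54 : P5 <-> P4.
  { split.
    - move=> H5 a b Hab. have E := H5 b a. rewrite -Hab in E. split.
      + rewrite {2}E !aA aI -E. done.
      + rewrite {2}E -aA aI -E. done.
    - move=> H4 x y. have [h1 h2] := H4 (mul x y) x (eq_sym (eq_trans (mA x x y) (f_equal (fun u => mul u y) (mI x)))).
      rewrite -h1. exact h2. }
  have P1DL : P1 -> rel_incl S D L.
  { move=> [[C [Hc [Hm Ha]]] _] a b [d1 d2].
    have h1 := cong_add _ _ _ _ C _ _ _ _ (Hc a b) (cong_refl _ _ _ _ C a).
    rewrite d1 -aA aI in h1.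
    have h2 := cong_add _ _ _ _ C _ _ _ _ (Hc b a) (cong_refl _ _ _ _ C b).
    rewrite d2 -aA aI in h2.
    apply: (cong_trans _ _ _ _ C _ _ _ h1).
    apply: (cong_trans _ _ _ _ C _ _ _ (Hc b a)).
    exact: cong_sym _ _ _ _ C _ _ h2. }
  have E12 : P1 <-> P2.
  { split.
    - move=> H1. split; first exact: P1DL.
      move=> x y. have H5 := p1_p5 _ _ _ HS H1. by rewrite (p5_A _ _ _ HS H5) aI.
    - move=> [HDL H2]. apply E15 => x y.
      have A : add x (mul x y) = x.
      { have [h _] : L x (add x (mul x y)).
        { apply HDL. split.
          - by rewrite aA aI H2.
          - by rewrite H2 aA aI. }
        rewrite dl mI mA mI in h. exact h. }
      have B : add (mul x y) x = x.
      { have [h _] : L x (add (mul x y) x).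
        { apply HDL. split.
          - by rewrite aA H2 aI.
          - by rewrite -(aA (mul x y) x x) aI aI. }
        rewrite dl mI mA mI in h. exact h. }
      by rewrite B A. }
  have E13 : P1 <-> P3.
  { split.
    - move=> H1. have H5 := p1_p5 _ _ _ HS H1.
      have A := p5_A _ _ _ HS H5. have lr := p5_lr _ _ _ HS H5.
      split; [|split].
      + move=> x y. by rewrite lr A aI.
      + move=> a b [h1 h2]. split.
        * by rewrite -h1 A aI.
        * by rewrite -h2 A aI.
      + exact: P1DL.
    - move=> [H3 [HRD HDL]]. apply E12. split; first exact HDL.
      move=> x y.
      have lr : mul (mul x y) x = mul x y.
      { have [h _] : L (mul x y) (mul (mul x y) x).
        { apply HDL, HRD. split.
          - by rewrite mA mI.
          - by rewrite -mA (mA x x y) mI mI. }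
        rewrite mA mI in h. exact h. }
      by rewrite -lr H3. }
  split; first exact E12. split; first exact E13.
  split; first (split=> H; [apply E54, E15 | apply E15, E54]; exact H).
  split; first exact E15.
  split=> H; [apply E56, E15 | apply E15, E56]; exact H.
Qed.
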